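(* Let $X\subseteq\Omega$ be club in $\Omega$ with $0\notin X$, $\Theta=\Theta_X$. Let $\alpha=\Omega\tilde\alpha>0$ (a nonzero multiple of $\Omega$), $\beta<\Omega$ and $\tau=\tau(\alpha)<\Omega$. If $\alpha+\beta\in\hat\varepsilon_{\Omega+1}\cap\mathrm{JUMP}(X)$ and $(\tau_n)_{n<\omega}$ is strictly increasing with supremum $\tau$, then $\big(\Theta(\alpha[\tau_n]+\Theta^*(\alpha+\beta))\big)_{n<\omega}$ is strictly increasing with supremum $\Theta(\alpha+\beta)$.
   Context: $\Omega$ is the first uncountable ordinal; $\varepsilon_{\Omega+1}$ the least $\varepsilon>\Omega$ with $\omega^\varepsilon=\varepsilon$. Every $0<\xi<\varepsilon_{\Omega+1}$ has a unique $\Omega$-normal form $\xi=\Omega^{\alpha}\beta+\gamma$ with $0<\beta<\Omega$, $\gamma<\Omega^{\alpha}$. $C(0)=\{0\}$, $C(\Omega^\alpha\beta+\gamma)=C(\alpha)\cup C(\gamma)\cup\{\beta\}$; $\xi^*=\max C(\xi)$. For $\theta<\Omega$: $0[\theta]=1[\theta]=0$; $(\Omega^\alpha\beta+\gamma)[\theta]=\Omega^\alpha\beta+\gamma[\theta]$ if $\gamma>0$; $(\Omega^\alpha\beta)[\theta]=\Omega^\alpha\theta$ if $\beta$ is a limit; $\Omega^{\alpha+1}[\theta]=\Omega^\alpha\theta$; $(\Omega^\alpha(\beta+1))[\theta]=\Omega^\alpha\beta+(\Omega^\alpha)[\theta]$ if $\beta>0$; $\Omega^\alpha[\theta]=\Omega^{\alpha[\theta]}$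 if $\alpha$ is a limit. $\tau(0)=0$, $\tau(\zeta+1)=1$, $\tau(\Omega^\alpha\beta+\gamma)=\tau(\gamma)$ if $\gamma>0$, $\tau(\Omega^\alpha\beta)=\beta$ if $\beta$ limit, $\tau(\Omega^\alpha(\beta+1))=\tau(\alpha)$ if $\alpha$ limit, $\tau(\Omega^{\alpha+1}(\beta+1))=\Omega$. $\Theta_X(\xi)$ is the least $\theta\in X$ with $\theta>\xi^*$ such that all $\zeta<\xi$ with $\zeta^*<\theta$ have $\Theta_X(\zeta)<\theta$. $\Omega_0=1$, $\Omega_{n+1}=\Omega^{\Omega_n}$, $\Theta_X(\varepsilon_{\Omega+1})=\sup_n\Theta_X(\Omega_n)$, $\hat\varepsilon_{\Omega+1}=\{\xi<\varepsilon_{\Omega+1}:\xi^*<\Theta_X(\varepsilon_{\Omega+1})\}$. $\mathrm{FIX}(X)$ is the set of $\xi$ with $(\xi[1])^*<\xi^*=\tau(\xi)=\Theta_X(\gamma)$ for some $\gamma>\xi$; $\mathrm{JUMP}(X)=\{0\}\cup\{\text{successors}\}\cup\mathrm{FIX}(X)$; $\Theta^*(\xi)=\Theta_X(\zeta)$ if $\xi=\zeta+1$, $\tau(\xi)$ if $\xi\in\mathrm{FIX}(X)$, and $0$ otherwise. *)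

(* Defs.v *)
From HB Require Import structures.
From mathcomp Require Import all_boot all_order.
From Stdlib Require Import ClassicalEpsilon.

Set Implicit Arguments.
Unset Strict Implicit.
Unset Printing Implicit Defensive.

Import Order.TTheory.
Local Open Scope order_scope.

(* The countable ordinals [0, Omega) are modelled by an abstract       *)
(* bottomed total order O that is isomorphic to omega_1: well-founded, *)
(* uncountable, with all proper initial segments countable.            *)

Definition is_omega1 {d : Order.disp_t} (O : bOrderType d) : Prop :=
  well_founded (fun x y : O => x < y) /\
  (forall f : O -> nat, ~ injective f) /\
  (forall x : O, exists f : O -> nat,
      forall y z : O, y < x -> z < x -> f y = f z -> y = z).

(* Omega-normal-form terms: TCons a b g stands for Omega^a * b + g. *)
Inductive oterm {d : Order.disp_t} (O : bOrderType d) : Type :=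
| TZero : oterm O
| TCons : oterm O -> O -> oterm O -> oterm O.
Arguments TZero {d O}.
Arguments TCons {d O} a b g.

Section Defs.
Context {d : Order.disp_t} {O : bOrderType d}.
Local Notation T := (oterm O).

Definition odec (P : Prop) : bool :=
  if excluded_middle_informative P then true else false.

Definition inhO : inhabited O := inhabits \bot.

Definition osucc (x : O) : O :=
  epsilon inhO (fun y => x < y /\ forall z, x < z -> y <= z).
Definition oone : O := osucc \bot.
Definition osuccP (b : O) : Prop := exists c, b = osucc c.
Definition opred (b : O) : O := epsilon inhO (fun c => b = osucc c).
Definition olimit (b : O) : Prop := \bot < b /\ ~ osuccP b.
(* ordinal addition a + b : the c with [a, c) order-isomorphic to [0, b) *)
Definition oadd (a b : O) : O :=
  epsilon inhO (fun c => exists f : O -> O,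
    (forall x, x < b -> a <= f x /\ f x < c) /\
    (forall x y, x < b -> y < b -> (x < y) = (f x < f y)) /\
    (forall z, a <= z -> z < c -> exists x, x < b /\ f x = z)).
Definition osup_is (f : nat -> O) (s : O) : Prop :=
  (forall n, f n <= s) /\ (forall u, (forall n, f n <= u) -> s <= u).
Definition club (X : O -> Prop) : Prop :=
  (forall x, exists y, X y /\ x < y) /\
  (forall l, \bot < l ->
     (forall x, x < l -> exists y, X y /\ x < y /\ y < l) -> X l).

Definition mono (a : T) (t : O) : T :=
  if t == \bot then TZero else TCons a t TZero.
Definition tone : T := TCons TZero oone TZero.

Fixpoint tlt (x y : T) {struct x} : Prop :=
  match x, y with
  | TZero, TZero => False
  | TZero, TCons _ _ _ => True
  | TCons _ _ _, TZero => False
  | TCons a b g, TCons a' b' g' =>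
      tlt a a' \/ (a = a' /\ (b < b' \/ (b = b' /\ tlt g g')))
  end.

Fixpoint twf (x : T) : Prop :=
  match x with
  | TZero => True
  | TCons a b g => twf a /\ twf g /\ \bot < b /\
      match g with TZero => True | TCons a' _ _ => tlt a' a end
  end.

Fixpoint star (x : T) : O :=
  match x with
  | TZero => \bot
  | TCons a b g => Order.max (star a) (Order.max b (star g))
  end.

Fixpoint tsucc (x : T) : T :=
  match x with
  | TZero => tone
  | TCons a b TZero =>
      match a with
      | TZero => TCons TZero (osucc b) TZero
      | _ => TCons a b tone
      end
  | TCons a b g => TCons a b (tsucc g)
  end.

Definition tsuccP (x : T) : Prop := exists z, twf z /\ x = tsucc z.
Definition tpred (x : T) : option T :=
  if odec (tsuccP x)
  then Some (epsilon (inhabits TZero) (fun z => twf z /\ x = tsucc z))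
  else None.

Fixpoint tadd (x : T) (t : O) : T :=
  match x with
  | TZero => mono TZero t
  | TCons a b TZero =>
      match a with
      | TZero => mono TZero (oadd b t)
      | _ => TCons a b (mono TZero t)
      end
  | TCons a b g => TCons a b (tadd g t)
  end.

Fixpoint fs (x : T) (th : O) : T :=
  match x with
  | TZero => TZero
  | TCons a b TZero =>
      (* pw = (Omega^a)[th] *)
      let pw := match a with
                | TZero => TZero
                | _ => match tpred a with
                       | Some a' => mono a' th
                       | None => TCons (fs a th) oone TZero
                       end
                end in
      if odec (olimit b) then mono a th
      else let c := opred b in
           if c == \bot then pw else TCons a c pw
  | TCons a b g => TCons a b (fs g th)
  end.

(* tau; None stands for the value Omega *)
Fixpoint tau (x : T) : option O :=
  match x with
  | TZero => Some \bot
  | TCons a b TZero =>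
      if odec (olimit b) then Some b
      else match a with
           | TZero => Some oone
           | _ => match tpred a with
                  | Some _ => None
                  | None => tau a
                  end
           end
  | TCons a b g => tau g
  end.

Fixpoint Omn (n : nat) : T :=
  match n with
  | 0 => tone
  | S k => TCons (Omn k) oone TZero
  end.

Fixpoint omega_multiple (x : T) : Prop :=
  match x with
  | TZero => True
  | TCons a _ g => a <> TZero /\ omega_multiple g
  end.

Definition ThetaSpec (X : O -> Prop) (F : T -> O) : Prop :=
  forall xi, twf xi ->
    let P := fun th => X th /\ star xi < th /\
               (forall z, twf z -> tlt z xi -> star z < th -> F z < th) in
    P (F xi) /\ (forall th, P th -> F xi <= th).

Definition Theta (X : O -> Prop) : T -> O :=
  epsilon (inhabits (fun _ => \bot)) (ThetaSpec X).

(* hat epsilon_{Omega+1} : xi^* < Theta(eps_{Omega+1}) = sup_n Theta(Omega_n) *)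
Definition hat (X : O -> Prop) (xi : T) : Prop :=
  exists s, osup_is (fun n => Theta X (Omn n)) s /\ star xi < s.

Definition FIX (X : O -> Prop) (xi : T) : Prop :=
  twf xi /\ star (fs xi oone) < star xi /\ tau xi = Some (star xi) /\
  exists g, twf g /\ tlt xi g /\ Theta X g = star xi.

Definition JUMP (X : O -> Prop) (xi : T) : Prop :=
  xi = TZero \/ tsuccP xi \/ FIX X xi.

Definition ThetaStar (X : O -> Prop) (xi : T) : O :=
  match tpred xi with
  | Some z => Theta X z
  | None => if odec (FIX X xi) then odflt \bot (tau xi) else \bot
  end.

End Defs.

(* Main.v *)
Require Import Defs.
From HB Require Import structures.
From mathcomp Require Import all_boot all_order.
From Stdlib Require Import ClassicalEpsilon Classical FunctionalExtensionality PropExtensionality Cantor.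
Set Implicit Arguments. Unset Strict Implicit. Unset Printing Implicit Defensive.
Import Order.TTheory.
Local Open Scope order_scope.

Section Ord.
Context {d : Order.disp_t} {O : bOrderType d}.
Context (Hom : is_omega1 O).

Lemma odecT (P : Prop) : P -> odec P = true.
Proof. by rewrite /odec; case: excluded_middle_informative. Qed.
Lemma odecF (P : Prop) : ~ P -> odec P = false.
Proof. by rewrite /odec; case: excluded_middle_informative. Qed.

Lemma wf_least (P : O -> Prop) x0 : P x0 -> exists m, P m /\ forall y, P y -> m <= y.
Proof.
  case: Hom => wf _.
  induction x0 as [x IH] using (well_founded_ind wf) => Px.
  case: (classic (exists y, P y /\ y < x)) => [[y [Py ylt]]|H].
  - exact: IH Py.
  - exists x; split => // y Py. rewrite leNgt; apply/negP => yx. apply: H; eauto.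
Qed.

Lemma neq_lt (x y : O) : y <= x -> y <> x -> y < x.
Proof. move=> le ne; rewrite lt_neqAle le andbT; apply/eqP. exact ne. Qed.

Lemma no_max (x : O) : exists y, x < y.
Proof.
  case: Hom => _ [ninj cnt].
  apply: NNPP => H.
  have ltx : forall y, y <> x -> y < x.
  { move=> y ne; apply: neq_lt ne. rewrite leNgt; apply/negP => xy; apply: H; by exists y. }
  case: (cnt x) => f Hf.
  apply: (ninj (fun y => if y == x then 0%N else (f y).+1)).
  move=> y z /=.
  case: eqP => [->|ynx]; case: eqP => [->|znx] //.
  move=> [] /Hf; apply; exact: ltx.
Qed.

Lemma osucc_spec (x : O) : x < osucc x /\ forall z, x < z -> osucc x <= z.
Proof.
  rewrite /osucc. apply: (epsilon_spec inhO (fun y => x < y /\ forall z, x < z -> y <= z)).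
  case: (no_max x) => y xy.
  case: (wf_least (P:= fun y => x < y) xy) => m [xm Hm]. by exists m.
Qed.

Lemma osucc_gt (x : O) : x < osucc x. Proof. exact: (osucc_spec x).1. Qed.
Lemma osucc_min (x z : O) : x < z -> osucc x <= z. Proof. exact: (osucc_spec x).2. Qed.
Lemma lt_osucc (x z : O) : z < osucc x -> z <= x.
Proof. move=> H; rewrite leNgt; apply/negP => /osucc_min; rewrite leNgt H. done. Qed.
Lemma osucc_le (x y : O) : x <= y -> osucc x <= osucc y.
Proof. move=> H; apply: osucc_min; exact: le_lt_trans H (osucc_gt y). Qed.
Lemma osucc_lt (x y : O) : x < y -> osucc x < osucc y.
Proof. move=> H; exact: le_lt_trans (osucc_min H) (osucc_gt y). Qed.
Lemma bot_lt_oone : \bot < (oone : O).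
Proof. exact: osucc_gt. Qed.
Lemma oone_le (x : O) : \bot < x -> oone <= x.
Proof. exact: osucc_min. Qed.

Lemma opred_spec (b : O) : \bot < b -> ~ olimit b -> b = osucc (opred b).
Proof.
  move=> b0 nl. have: osuccP b by apply: NNPP => ns; apply: nl.
  move=> ex. exact: (epsilon_spec inhO (fun c => b = osucc c) ex).
Qed.

Lemma olimit_succ (l c : O) : olimit l -> c < l -> osucc c < l.
Proof.
  move=> [l0 ns] cl. apply: neq_lt; first exact: osucc_min.
  move=> e; apply: ns; by exists c.
Qed.

Lemma oone_lt_limit (l : O) : olimit l -> oone < l.
Proof. move=> H; apply: olimit_succ => //; exact: H.1. Qed.

Lemma bounded_seq (g : nat -> O) : exists u, forall n, g n < u.
Proof.
  apply: NNPP => H.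
  have H' : forall y, exists n, y < g n.
  { move=> y. case: (no_max y) => y' yy'. apply: NNPP => H2. apply: H. exists y'.
    move=> n. rewrite ltNge; apply/negP => le. apply: H2. exists n. exact: lt_le_trans le. }
  case: Hom => _ [ninj cnt].
  pose N y := epsilon (inhabits 0%N) (fun n => y < g n).
  have HN y : y < g (N y) := epsilon_spec _ _ (H' y).
  pose fn n := epsilon (inhabits (fun _ : O => 0%N))
     (fun f : O -> nat => forall y z, y < g n -> z < g n -> f y = f z -> y = z).
  have Hfn n : forall y z, y < g n -> z < g n -> fn n y = fn n z -> y = z
    := epsilon_spec _ _ (cnt (g n)).
  apply: (ninj (fun y => Cantor.to_nat (N y, fn (N y) y))).
  move=> y z H0; have [eN ef] := Cantor.to_nat_inj _ _ H0.
  rewrite -eN in ef.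
  apply: (Hfn (N y) y z (HN y) _ ef). rewrite eN; exact: HN.
Qed.

Lemma sup_exists (f : nat -> O) : exists s, osup_is f s.
Proof.
  case: (bounded_seq f) => u Hu.
  case: (wf_least (P := fun u => forall n, f n <= u) (x0:=u)) => [n|s [Hs Hmin]].
  - exact: ltW.
  - by exists s.
Qed.

Lemma osup_lt (f : nat -> O) s x : osup_is f s -> x < s -> exists n, x < f n.
Proof.
  move=> [H1 H2] xs. apply: NNPP => H.
  have: s <= x. { apply: H2 => n. rewrite leNgt; apply/negP => lt; apply: H; by exists n. }
  by rewrite leNgt xs.
Qed.

Lemma osup_incr (f : nat -> O) s n : osup_is f s -> (forall n, f n < f n.+1) -> f n < s.
Proof. move=> [H1 _] inc. exact: lt_le_trans (inc n) (H1 _). Qed.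

Lemma osup_club (X : O -> Prop) (f : nat -> O) s : club X -> (forall n, X (f n)) ->
  (forall n, f n < f n.+1) -> osup_is f s -> X s.
Proof.
  move=> [_ cl] Xf inc hs. apply: cl.
  - exact: le_lt_trans (le0x (f 0%N)) (osup_incr 0 hs inc).
  - move=> x xs. case: (osup_lt hs xs) => n xn. exists (f n); split => //; split => //.
    exact: osup_incr.
Qed.

Lemma osup_limit (f : nat -> O) s : (forall n, f n < f n.+1) -> osup_is f s -> olimit s.
Proof.
  move=> inc hs. split.
  - exact: le_lt_trans (le0x (f 0%N)) (osup_incr 0 hs inc).
  - move=> [c e]. have: forall n, f n <= c.
    { move=> n. apply: lt_osucc. rewrite -e. exact: osup_incr. }
    move=> /hs.2. rewrite e leNgt osucc_gt. done.
Qed.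

Definition ofin (y : O) := forall l, olimit l -> y < l.

Lemma ofin_succ (y : O) : ofin y -> ofin (osucc y).
Proof. move=> H l hl; apply: olimit_succ => //; exact: H. Qed.

Lemma oadd_one (delta l : O) : olimit l -> l <= delta -> oadd oone delta = delta.
Proof.
  move=> hl ld.
  pose g y := if odec (ofin y) then osucc y else y.
  have d0 : \bot < delta by exact: lt_le_trans hl.1 ld.
  have gin : forall y, y < delta -> oone <= g y /\ g y < delta.
  { move=> y yd; rewrite /g. case: (classic (ofin y)) => fy.
    - rewrite odecT //; split; first exact: osucc_le (le0x _).
      exact: lt_le_trans (olimit_succ hl (fy l hl)) ld.
    - rewrite odecF //; split => //.
      have [l' [hl' ly]] : exists l', olimit l' /\ l' <= y.
      { apply: NNPP => H; apply: fy => l' hl'. rewrite ltNge; apply/negP => le; apply: H; by exists l'. }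
      exact: le_trans (oone_le hl'.1) ly. }
  have nfin : forall y, ~ ofin y -> exists l', olimit l' /\ l' <= y.
  { move=> y fy. apply: NNPP => H; apply: fy => l' hl'. rewrite ltNge; apply/negP => le; apply: H; by exists l'. }
  have gmono : forall x y, x < y -> g x < g y.
  { move=> x y xy; rewrite /g.
    case: (classic (ofin x)) => fx; case: (classic (ofin y)) => fy.
    - rewrite !odecT //. exact: osucc_lt.
    - rewrite odecT // odecF //. case: (nfin _ fy) => l' [hl' ly].
      exact: lt_le_trans (olimit_succ hl' (fx l' hl')) ly.
    - case: (nfin _ fx) => l' [hl' lx]. have := fy l' hl'.
      by rewrite ltNge (le_trans lx (ltW xy)).
    - by rewrite !odecF. }
  have gsurj : forall z, oone <= z -> z < delta -> exists x, x < delta /\ g x = z.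
  { move=> z z1 zd. case: (classic (ofin z)) => fz.
    - have z0 : \bot < z by exact: lt_le_trans bot_lt_oone z1.
      have nl : ~ olimit z by move=> hz; have := fz z hz; rewrite ltxx.
      have e := opred_spec z0 nl.
      exists (opred z); split.
      + apply: lt_trans zd. rewrite {2}e. exact: osucc_gt.
      + rewrite /g odecT; first by rewrite -e.
        move=> l' hl'. apply: lt_trans (fz l' hl'). rewrite {2}e; exact: osucc_gt.
    - exists z; split => //. by rewrite /g odecF. }
  have Hex : exists c, exists f : O -> O,
    (forall x, x < delta -> oone <= f x /\ f x < c) /\
    (forall x y, x < delta -> y < delta -> (x < y) = (f x < f y)) /\
    (forall z, oone <= z -> z < c -> exists x, x < delta /\ f x = z).
  { exists delta, g; split => //; split => // x y _ _.
    apply/idP/idP; first exact: gmono.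
    move=> H. rewrite ltNge; apply/negP; rewrite le_eqVlt => /orP [/eqP e|yx].
    - by move: H; rewrite e ltxx.
    - have := gmono _ _ yx. by rewrite ltNge (ltW H). }
  have [f [fin [fmono fsurj]]] := epsilon_spec inhO _ Hex.
  rewrite /oadd. set c := epsilon _ _ in fin fmono fsurj *.
  have fg : forall x, x < delta -> f x = g x.
  { case: Hom => wf _.
    move=> x; induction x as [x IH] using (well_founded_ind wf) => xd.
    case: (ltgtP (f x) (g x)) => // h.
    - have [y [yd gy]] := gsurj (f x) (fin x xd).1 (lt_trans h (gin x xd).2).
      case: (ltgtP y x) => yx.
      + have := fmono y x yd xd. rewrite yx IH // gy ltxx. done.
      + have := gmono _ _ yx. by rewrite gy ltNge (ltW h).
      + by move: h; rewrite -gy yx ltxx.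
    - have [y [yd fy]] := fsurj (g x) (gin x xd).1 (lt_trans h (fin x xd).2).
      case: (ltgtP y x) => yx.
      + have := gmono _ _ yx. by rewrite -IH // fy ltxx.
      + have := fmono x y xd yd. rewrite yx fy => /esym. by rewrite ltNge (ltW h).
      + by move: h; rewrite -fy yx ltxx. }
  case: (ltgtP c delta) => // h.
  - have c1 : oone <= c.
    { apply: le_trans (fin \bot d0).1 _. exact: ltW (fin \bot d0).2. }
    have [y [yd gy]] := gsurj c c1 h.
    have := (fin y yd).2. by rewrite fg // gy ltxx.
  - have [y [yd fy]] := fsurj delta (oone_le d0) h.
    have := (gin y yd).2. by rewrite -fg // fy ltxx.
Qed.


Local Notation T := (oterm O).

Lemma tlt_irr (x : T) : ~ tlt x x.
Proof.
  elim: x => //= a IHa b g IHg.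
  case=> [H|[_ [H|[_ H]]]]; [exact: IHa H | by rewrite ltxx in H | exact: IHg H].
Qed.

Lemma tlt_trans (x y z : T) : tlt x y -> tlt y z -> tlt x z.
Proof.
  elim: x y z => [|a IHa b g IHg] [|a' b' g'] [|a'' b'' g''] //= H1 H2; try by case: H1; try by case: H2.
  case: H1 => [h1|[e1 h1]]; case: H2 => [h2|[e2 h2]].
  - left; exact: IHa h1 h2.
  - left; by rewrite -e2.
  - left; by rewrite e1.
  - right; split; first by rewrite e1.
    case: h1 => [l1|[eb1 l1]]; case: h2 => [l2|[eb2 l2]].
    + left; exact: lt_trans l1 l2.
    + left; by rewrite -eb2.
    + left; by rewrite eb1.
    + right; split; first by rewrite eb1. exact: IHg l1 l2.
Qed.

Definition tle (x y : T) := x = y \/ tlt x y.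

Lemma tle_lt_trans (x y z : T) : tle x y -> tlt y z -> tlt x z.
Proof. by case=> [->|h] // h2; exact: tlt_trans h h2. Qed.
Lemma tlt_le_trans (x y z : T) : tlt x y -> tle y z -> tlt x z.
Proof. by move=> h [<-|h2] //; exact: tlt_trans h h2. Qed.
Lemma tle_trans (x y z : T) : tle x y -> tle y z -> tle x z.
Proof. case=> [->|h] // h2; right; exact: tlt_le_trans h h2. Qed.

Definition hd_lt (e : T) (x : T) : Prop :=
  match x with TZero => True | TCons a _ _ => tlt a e end.
Definition hd_le (e : T) (x : T) : Prop :=
  match x with TZero => True | TCons a _ _ => tle a e end.

Lemma mono_cases (a : T) (v : O) :
  (v = \bot /\ mono a v = TZero) \/ (\bot < v /\ mono a v = TCons a v TZero).
Proof.
  rewrite /mono. case: eqP => [->|ne]; [by left | right; split => //].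
  rewrite lt_neqAle le0x andbT. apply/eqP => e; apply: ne; by rewrite e.
Qed.
Lemma mono_bot (a : T) : mono a \bot = TZero.
Proof. by rewrite /mono eqxx. Qed.
Lemma mono_pos (a : T) (v : O) : \bot < v -> mono a v = TCons a v TZero.
Proof. move=> h; case: (mono_cases a v) => [[e _]|[_ ->]] //. by rewrite e ltxx in h. Qed.

Lemma tlt_zero (x : T) : ~ tlt x TZero.
Proof. move=> H; by case: x H. Qed.

Definition Rt (z y : T) := twf z /\ twf y /\ tlt z y.

Lemma acc_zero : Acc Rt TZero.
Proof. constructor => z [_ [_ h]]; by case: z h. Qed.

Lemma acc_L1 (a : T) : (forall y, twf y -> hd_lt a y -> Acc Rt y) ->
  forall b g, twf (TCons a b g) -> Acc Rt (TCons a b g).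
Proof.
  case: Hom => Hwf _.
  move=> H b. induction b as [b IHb] using (well_founded_ind Hwf).
  move=> g tw. have accg : Acc Rt g by apply: H; [exact: tw.2.1 | exact: tw.2.2.2].
  move: tw; induction accg as [g _ IHg] => tw.
  constructor => z [twz [_ lt]].
  case: z twz lt => [|a' b' g'] twz lt; first exact: acc_zero.
  case: lt => [la|[ea [lb|[eb lg]]]].
  - by apply: H.
  - subst a'. exact: IHb.
  - subst a' b'. apply: IHg => //. split; [exact: twz.2.1 | split; [exact: tw.2.1 | exact: lg]].
Qed.

Lemma acc_L2 (a : T) : Acc Rt a -> twf a -> forall y, twf y -> hd_le a y -> Acc Rt y.
Proof.
  elim=> {}a _ IH twa y twy.
  case: y twy => [|a' b' g'] twy hy; first exact: acc_zero.
  case: hy => [ea|la].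
  - subst a'. apply: acc_L1 twy => y' twy' hy'.
    case: y' twy' hy' => [|a'' b'' g''] twy' hy'; first exact: acc_zero.
    apply: (IH a'') => //; first by split; [exact: twy'.1 | split].
    exact: twy'.1. by left.
  - apply: (IH a') => //; first by split; [exact: twy.1 | split].
    exact: twy.1. by left.
Qed.

Lemma wf_Rt : well_founded Rt.
Proof.
  move=> x. case: (classic (twf x)) => tx; last first.
  { constructor => z [_ [h _]]; by []. }
  elim: x tx => [|a IHa b g _] tx; first exact: acc_zero.
  apply: (acc_L2 (IHa tx.1) tx.1) => //. by left.
Qed.

(* countability of terms with small coefficients *)
Fixpoint tcode (f : O -> nat) (x : T) : nat :=
  match x with
  | TZero => 0%N
  | TCons a b g => S (Cantor.to_nat (tcode f a, Cantor.to_nat (f b, tcode f g)))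
  end.

Lemma tcode_inj f th : (forall y z, y < th -> z < th -> f y = f z -> y = z) ->
  forall x y : T, star x < th -> star y < th -> tcode f x = tcode f y -> x = y.
Proof.
  move=> Hf. elim=> [|a IHa b g IHg] [|a' b' g'] sx sy E //.
  have H : Cantor.to_nat (tcode f a, Cantor.to_nat (f b, tcode f g)) =
           Cantor.to_nat (tcode f a', Cantor.to_nat (f b', tcode f g')) := congr1 predn E.
  have e1 : tcode f a = tcode f a' := congr1 fst (Cantor.to_nat_inj _ _ H).
  have e2 : Cantor.to_nat (f b, tcode f g) = Cantor.to_nat (f b', tcode f g')
    := congr1 snd (Cantor.to_nat_inj _ _ H).
  have e3 : f b = f b' := congr1 fst (Cantor.to_nat_inj _ _ e2).
  have e4 : tcode f g = tcode f g' := congr1 snd (Cantor.to_nat_inj _ _ e2).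
  move: sx sy; rewrite /= !gt_max => /andP [s1 /andP [s2 s3]] /andP [s1' /andP [s2' s3']].
  by rewrite (IHa _ s1 s1' e1) (IHg _ s3 s3' e4) (Hf _ _ s2 s2' e3).
Qed.

Lemma term_bound (th : O) (G : T -> O) : exists u, forall z, twf z -> star z < th -> G z < u.
Proof.
  case: Hom => _ [_ cnt]. case: (cnt th) => f Hf.
  pose h n := G (epsilon (inhabits TZero) (fun z => twf z /\ star z < th /\ tcode f z = n)).
  case: (bounded_seq h) => u Hu. exists u => z tz sz.
  have ex : exists z', twf z' /\ star z' < th /\ tcode f z' = tcode f z by exists z.
  have [tz' [sz' cz']] := epsilon_spec (inhabits TZero) _ ex.
  have E : epsilon (inhabits TZero) (fun z0 => twf z0 /\ star z0 < th /\ tcode f z0 = tcode f z) = z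
    := tcode_inj Hf sz' sz cz'.
  have := Hu (tcode f z). by rewrite /h E.
Qed.

Lemma closure_ex (X : O -> Prop) : club X -> forall (G : T -> O) (x0 : O),
  exists th, X th /\ x0 < th /\ forall z, twf z -> star z < th -> G z < th.
Proof.
  move=> cX G x0. have [unb clo] := cX.
  have nxt : forall th, exists y, X y /\ th < y /\ forall z, twf z -> star z < th -> G z < y.
  { move=> th. case: (term_bound th G) => u Hu. case: (unb (Order.max th u)) => y [Xy lt].
    rewrite gt_max in lt; case/andP: lt => l1 l2.
    exists y; split=>//; split=>// z tz sz. exact: lt_trans (Hu z tz sz) l2. }
  pose nx th := epsilon inhO (fun y => X y /\ th < y /\ forall z, twf z -> star z < th -> G z < y).
  have Hnx th : X (nx th) /\ th < nx th /\ forall z, twf z -> star z < th -> G z < nx th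
    := epsilon_spec inhO _ (nxt th).
  case: (unb x0) => y0 [Xy0 x0y0].
  pose f := fix f n := match n with 0%N => y0 | S k => nx (f k) end.
  have inc n : f n < f n.+1 := (Hnx (f n)).2.1.
  have Xf n : X (f n) by case: n => [|n] //=; exact: (Hnx _).1.
  case: (sup_exists f) => s hs.
  exists s; split; first exact: (osup_club cX Xf inc hs).
  split; first exact: lt_trans x0y0 (osup_incr 0 hs inc).
  move=> z tz sz. case: (osup_lt hs sz) => n zn.
  exact: lt_trans ((Hnx (f n)).2.2 z tz zn) (osup_incr n.+1 hs inc).
Qed.

Definition tbody (X : O -> Prop) (xi : T) (rec : forall z, Rt z xi -> O) : O :=
  epsilon inhO (fun th =>
    (X th /\ star xi < th /\ forall z (H : Rt z xi), star z < th -> rec z H < th) /\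
    forall th', (X th' /\ star xi < th' /\ forall z (H : Rt z xi), star z < th' -> rec z H < th') ->
      th <= th').

Definition Fth (X : O -> Prop) : T -> O := Fix wf_Rt (fun _ => O) (tbody X).

Lemma Fth_eq X xi : Fth X xi = @tbody X xi (fun y _ => Fth X y).
Proof.
  rewrite /Fth Fix_eq //. move=> x f g H.
  have -> : f = g; last by [].
  apply: functional_extensionality_dep => y; apply: functional_extensionality_dep => p; exact: H.
Qed.

Lemma ThetaSpec_Fth X : club X -> ThetaSpec X (Fth X).
Proof.
  move=> cX xi twx P.
  pose Pr th := X th /\ star xi < th /\ forall z (H : Rt z xi), star z < th -> Fth X z < th.
  have key : forall th, Pr th <-> P th.
  { move=> th; rewrite /Pr /P; split => [[h1 [h2 h3]]|[h1 [h2 h3]]]; split => //; split => //.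
    - move=> z tz lz; exact: h3 (conj tz (conj twx lz)).
    - move=> z [tz [_ lz]]; exact: h3. }
  have ex : exists th, Pr th /\ forall th', Pr th' -> th <= th'.
  { case: (closure_ex cX (Fth X) (star xi)) => th0 [h1 [h2 h3]].
    have p0 : Pr th0 by split => //; split => // z [tz _]; exact: h3.
    case: (wf_least p0) => m [pm hm]. by exists m. }
  have E := Fth_eq X xi.
  have [h1 h2] := epsilon_spec inhO _ ex.
  rewrite E. split; first by apply/key.
  move=> th /key; exact: h2.
Qed.

Lemma ThetaSpec_Theta (X : O -> Prop) : club X -> ThetaSpec X (Theta X).
Proof.
  move=> cX. rewrite /Theta. apply: (epsilon_spec (inhabits (fun _ => \bot)) (ThetaSpec X)).
  exists (Fth X); exact: ThetaSpec_Fth.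
Qed.


Lemma star_cons_le (a : T) b g u : star a <= u -> b <= u -> star g <= u -> star (TCons a b g) <= u.
Proof. move=> h1 h2 h3 /=. by rewrite !ge_max h1 h2 h3. Qed.
Lemma star_a_le (a : T) b g : star a <= star (TCons a b g).
Proof. by rewrite /= le_max lexx. Qed.
Lemma star_b_le (a : T) b g : b <= star (TCons a b g).
Proof. by rewrite /= !le_max lexx orbT. Qed.
Lemma star_g_le (a : T) b g : star g <= star (TCons a b g).
Proof. by rewrite /= !le_max lexx !orbT. Qed.
Lemma star_mono_le (a : T) v u : star a <= u -> v <= u -> star (mono a v) <= u.
Proof.
  move=> h1 h2; case: (mono_cases a v) => [[_ ->]|[_ ->]]; first exact: le0x.
  apply: star_cons_le => //; exact: le0x.
Qed.
Lemma star_mono0_le v u : v <= u -> star (mono (TZero : T) v) <= u.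
Proof. move=> h; apply: star_mono_le h. exact: le0x. Qed.
Lemma star_mono_ge (a : T) v : v <= star (mono a v).
Proof.
  case: (mono_cases a v) => [[-> _]|[_ ->]]; first exact: le0x. exact: star_b_le.
Qed.
Lemma twf_mono (a : T) v : twf a -> twf (mono a v).
Proof. move=> h; case: (mono_cases a v) => [[_ ->]|[hv ->]] //. Qed.

Lemma tcons_ne0 (a : T) b g : TCons a b g <> TZero.
Proof. by []. Qed.
Lemma tlt_zero_ne (e : T) : e <> TZero -> tlt TZero e.
Proof. by case: e. Qed.

Lemma tpred_some (x z : T) : tpred x = Some z -> twf z /\ x = tsucc z.
Proof.
  rewrite /tpred. case: (classic (tsuccP x)) => h.
  - rewrite odecT // => [[<-]]. exact: (epsilon_spec (inhabits TZero) _ h).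
  - by rewrite odecF.
Qed.

Lemma fs_tail (a : T) b g th : g <> TZero -> fs (TCons a b g) th = TCons a b (fs g th).
Proof. by case: g. Qed.
Lemma fs_lim (a : T) b th : olimit b -> fs (TCons a b TZero) th = mono a th.
Proof. move=> h /=. by rewrite odecT. Qed.
Lemma fs_succ (a : T) b th : a <> TZero -> tpred a = None -> ~ olimit b ->
  fs (TCons a b TZero) th = if opred b == \bot then TCons (fs a th) oone TZero
                             else TCons a (opred b) (TCons (fs a th) oone TZero).
Proof. case: a => [//|a1 b1 g1] _ hp hl /=. by rewrite odecF // hp. Qed.

Lemma tadd_tail (a : T) b g v : g <> TZero -> tadd (TCons a b g) v = TCons a b (tadd g v).
Proof. by case: g. Qed.
Lemma tadd_last (a : T) b v : a <> TZero -> tadd (TCons a b TZero) v = TCons a b (mono TZero v).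
Proof. by case: a. Qed.
Lemma tadd0 v : tadd (TZero : T) v = mono (TZero : T) v.
Proof. by []. Qed.
Lemma tadd_last0 b v : tadd (TCons TZero b TZero) v = mono (TZero : T) (oadd b v).
Proof. by []. Qed.

Definition goodt (x : T) (t : O) := twf x /\ tau x = Some t /\ olimit t.

Lemma not_limit_oone : ~ olimit (oone : O).
Proof. move=> [_ h]; apply: h; by exists \bot. Qed.

Lemma good_ind (P : T -> O -> Prop) :
  (forall a b g t, g <> TZero -> goodt g t -> twf (TCons a b g) -> P g t -> P (TCons a b g) t) ->
  (forall a b, twf (TCons a b TZero) -> olimit b -> P (TCons a b TZero) b) ->
  (forall a b t, twf (TCons a b TZero) -> a <> TZero -> goodt a t -> tpred a = None ->
     ~ olimit b -> b = osucc (opred b) -> P a t -> P (TCons a b TZero) t) ->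
  forall x t, goodt x t -> P x t.
Proof.
  move=> Ht Hl Hs. elim=> [|a IHa b g IHg] t [tx [ht lt]].
  - move: ht => [] e. by rewrite -e in lt; have := lt.1; rewrite ltxx.
  - case: g IHg tx ht => [|a2 b2 g2] IHg tx ht.
    + move: ht => /=. case: (classic (olimit b)) => hb.
      * rewrite odecT // => [[<-]]. exact: Hl.
      * rewrite odecF //. case: a IHa tx => [|a1 b1 g1] IHa tx.
        -- move=> [e]; by rewrite -e in lt; have := not_limit_oone.
        -- case E: (tpred _) => [z|] // ht.
           have ga : goodt (TCons a1 b1 g1) t by split; [exact: tx.1 | split].
           apply: Hs => //. exact: opred_spec tx.2.2.1 hb. exact: IHa.
    + have gg : goodt (TCons a2 b2 g2) t by split; [exact: tx.2.1 | split].
      apply: Ht => //. exact: IHg.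
Qed.

Lemma fs_lt : forall x t, goodt x t -> forall th, th < t -> tlt (fs x th) x.
Proof.
  apply: good_ind.
  - move=> a b g t gn _ _ IH th lt. rewrite fs_tail //. right; split => //; right; split => //.
    exact: IH.
  - move=> a b _ hb th lt. rewrite fs_lim //. case: (mono_cases a th) => [[_ ->]|[_ ->]] //.
    right; split => //; by left.
  - move=> a b t _ an _ hp hb eb IH th lt. rewrite fs_succ //.
    case: eqP => c0; first by left; exact: IH.
    right; split => //; left. rewrite {2}eb. exact: osucc_gt.
Qed.

Lemma fs_twf : forall x t, goodt x t -> forall th, th < t ->
  twf (fs x th) /\ forall e, hd_lt e x -> hd_lt e (fs x th).
Proof.
  apply: good_ind.
  - move=> a b g t gn _ tx IH th lt. rewrite fs_tail //. have [h1 h2] := IH th lt.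
    split => //. split; first exact: tx.1. split => //. split; first exact: tx.2.2.1.
    exact: h2 tx.2.2.2.
  - move=> a b tx hb th lt. rewrite fs_lim //.
    case: (mono_cases a th) => [[_ ->]|[hth ->]] //. split => //. by split; [exact: tx.1|].
  - move=> a b t tx an ga hp hb eb IH th lt. rewrite fs_succ //.
    have [h1 _] := IH th lt. have flt := fs_lt ga lt.
    case: eqP => c0.
    + split; first by split => //; split => //; split => //; exact: bot_lt_oone.
      move=> e /= hae. exact: tlt_trans flt hae.
    + split => //. split; first exact: tx.1. split; first by split => //; split => //; split => //; exact: bot_lt_oone.
      split => //. rewrite lt_neqAle le0x andbT. apply/eqP => e; apply: c0; by rewrite e.
Qed.

Lemma fs_ne0 : forall x t, goodt x t -> forall th, \bot < th -> fs x th <> TZero.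
Proof.
  apply: good_ind.
  - move=> a b g t gn _ _ _ th _. by rewrite fs_tail.
  - move=> a b _ hb th h. by rewrite fs_lim // mono_pos.
  - move=> a b t _ an _ hp hb _ _ th _. rewrite fs_succ //. by case: eqP.
Qed.

Lemma fs_mono : forall x t, goodt x t -> forall th th', th < th' -> th' < t -> tlt (fs x th) (fs x th').
Proof.
  apply: good_ind.
  - move=> a b g t gn _ _ IH th th' l1 l2. rewrite !fs_tail //. right; split => //; right; split => //.
    exact: IH.
  - move=> a b _ hb th th' l1 l2. rewrite !fs_lim //.
    have h' : \bot < th' by exact: le_lt_trans (le0x th) l1.
    rewrite (mono_pos a h'). case: (mono_cases a th) => [[_ ->]|[_ ->]] //.
    right; split => //; by left.
  - move=> a b t _ an _ hp hb _ IH th th' l1 l2. rewrite !fs_succ //.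
    case: eqP => c0; first by left; exact: IH.
    right; split => //; right; split => //; left; exact: IH.
Qed.

Lemma fs_mono_le (x : T) t th th' : goodt x t -> th <= th' -> th' < t -> tle (fs x th) (fs x th').
Proof.
  move=> gx; rewrite le_eqVlt => /orP [/eqP ->|l] l2; first by left.
  right; exact: (fs_mono gx l l2).
Qed.

Lemma fs_om : forall x t, goodt x t -> omega_multiple x -> forall th, \bot < th -> omega_multiple (fs x th).
Proof.
  apply: good_ind.
  - move=> a b g t gn _ _ IH [an om] th h. rewrite fs_tail //. split => //. exact: IH.
  - move=> a b _ hb [an _] th h. by rewrite fs_lim // mono_pos.
  - move=> a b t _ an ga hp hb _ _ _ th h. rewrite fs_succ //.
    have fn := fs_ne0 ga h. by case: eqP.
Qed.

Lemma fs_tadd_lt : forall x t, goodt x t -> omega_multiple x -> forall th th' v, th < th' -> th' < t ->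
  tlt (tadd (fs x th) v) (fs x th').
Proof.
  apply: good_ind.
  - move=> a b g t gn gg _ IH [an om] th th' v l1 l2. rewrite !fs_tail //.
    have h' : \bot < th' by exact: le_lt_trans (le0x th) l1.
    case E: (fs g th) => [|a2 b2 g2].
    + rewrite tadd_last //. right; split => //; right; split => //.
      have fn := fs_ne0 gg h'. have fo := fs_om gg om h'.
      case: (fs g th') fn fo => [//|a3 b3 g3] _ [a3n _].
      case: (mono_cases (TZero : T) v) => [[_ ->]|[_ ->]] //. left; exact: tlt_zero_ne.
    + rewrite tadd_tail // -E. right; split => //; right; split => //. exact: IH.
  - move=> a b _ hb [an _] th th' v l1 l2. rewrite !fs_lim //.
    have h' : \bot < th' by exact: le_lt_trans (le0x th) l1.
    rewrite (mono_pos a h'). case: (mono_cases a th) => [[_ ->]|[hth ->]].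
    + change (tadd TZero v) with (mono (TZero : T) v).
      case: (mono_cases (TZero : T) v) => [[_ ->]|[_ ->]] //. left; exact: tlt_zero_ne.
    + rewrite tadd_last //. right; split => //; by left.
  - move=> a b t _ an ga hp hb _ _ _ th th' v l1 l2. rewrite !fs_succ //.
    have h' : \bot < th' by exact: le_lt_trans (le0x th) l1.
    have key : tlt (tadd (TCons (fs a th) oone TZero) v) (TCons (fs a th') oone TZero).
    { have fn := fs_ne0 ga h'.
      case E: (fs a th) => [|a2 b2 g2].
      - rewrite tadd_last0. case: (mono_cases (TZero : T) (oadd oone v)) => [[_ ->]|[_ ->]] //.
        left; exact: tlt_zero_ne.
      - rewrite tadd_last // -E. left; exact: (fs_mono ga l1 l2). }
    case: eqP => c0 //. rewrite tadd_tail //. right; split => //; right; split => //.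
Qed.

Lemma fs_cof : forall x t, goodt x t -> forall z, twf z -> tlt z x -> exists th, th < t /\ tlt z (fs x th).
Proof.
  apply: good_ind.
  - move=> a b g t gn gg _ IH z tz lz.
    have o1 : oone < t := oone_lt_limit gg.2.2.
    case: z tz lz => [|a' b' g'] tz lz.
    + exists oone; split => //. by rewrite fs_tail.
    + case: lz => [la|[ea [lb|[eb lg]]]].
      * exists oone; split => //. rewrite fs_tail //; by left.
      * exists oone; split => //. rewrite fs_tail //; right; split => //; by left.
      * have [th [l1 l2]] := IH g' tz.2.1 lg. exists th; split => //.
        rewrite fs_tail //; right; split => //; right; split => //.
  - move=> a b tx hb z tz lz.
    have o1 : oone < b := oone_lt_limit hb.
    case: z tz lz => [|a' b' g'] tz lz.
    + exists oone; split => //. by rewrite fs_lim // mono_pos //; exact: bot_lt_oone.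
    + case: lz => [la|[ea [lb|[eb lg]]]].
      * exists oone; split => //. rewrite fs_lim // mono_pos; last exact: bot_lt_oone. by left.
      * exists (osucc b'); split; first exact: olimit_succ.
        rewrite fs_lim // mono_pos; last exact: le_lt_trans (le0x b') (osucc_gt b').
        right; split => //; left; exact: osucc_gt.
      * by have := tlt_zero lg.
  - move=> a b t tx an ga hp hb eb IH z tz lz.
    have o1 : oone < t := oone_lt_limit ga.2.2.
    case: z tz lz => [|a' b' g'] tz lz.
    + exists oone; split => //. rewrite fs_succ //. by case: eqP.
    + case: lz => [la|[ea [lb|[eb' lg]]]].
      * have [th [l1 l2]] := IH a' tz.1 la. exists th; split => //.
        rewrite fs_succ //. case: eqP => _; by left.
      * subst a'. have b'c : b' <= opred b by apply: lt_osucc; rewrite -eb.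
        case: (opred b =P \bot) => c0.
        -- exfalso. have := tz.2.2.1. by rewrite ltNge -c0 b'c.
        -- have fe : forall th, fs (TCons a b TZero) th = TCons a (opred b) (TCons (fs a th) oone TZero).
           { move=> th; rewrite fs_succ //. case: eqP => // e; by exfalso; apply: c0. }
           move: b'c; rewrite le_eqVlt => /orP [/eqP eb'|lb'].
           ++ subst b'. move: tz => [_ [tg' [_ hg']]].
              case: g' tg' hg' => [|a'' b'' g''] tg' hg'.
              ** exists oone; split => //. rewrite fe. right; split => //; right; split => //.
              ** have [th [l1 l2]] := IH a'' tg'.1 hg'. exists th; split => //.
                 rewrite fe. right; split => //; right; split => //; by left.
           ++ exists oone; split => //. rewrite fe. right; split => //; by left.
      * by have := tlt_zero lg.
Qed.

Lemma fs_star_le : forall x t, goodt x t -> forall th u, star x <= u -> th <= u -> star (fs x th) <= u.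
Proof.
  apply: good_ind.
  - move=> a b g t gn _ _ IH th u hx hth. rewrite fs_tail //.
    apply: star_cons_le. exact: le_trans (star_a_le a b g) hx. exact: le_trans (star_b_le a b g) hx.
    apply: IH hth. exact: le_trans (star_g_le a b g) hx.
  - move=> a b _ hb th u hx hth. rewrite fs_lim //. apply: star_mono_le hth.
    exact: le_trans (star_a_le a b TZero) hx.
  - move=> a b t _ an _ hp hb eb IH th u hx hth. rewrite fs_succ //.
    have ha := le_trans (star_a_le a b TZero) hx. have hb' := le_trans (star_b_le a b TZero) hx.
    have o1 : oone <= u.
    { apply: le_trans hb'. apply: oone_le. rewrite eb. exact: le_lt_trans (le0x _) (osucc_gt _). }
    have hpw : star (TCons (fs a th) oone TZero) <= u.
    { apply: star_cons_le => //; [exact: IH | exact: le0x]. }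
    case: eqP => c0 //. apply: star_cons_le => //. apply: le_trans hb'. rewrite {2}eb. exact: ltW (osucc_gt _).
Qed.

Lemma fs_star_ge : forall x t, goodt x t -> forall th, th <= star (fs x th).
Proof.
  apply: good_ind.
  - move=> a b g t gn _ _ IH th. rewrite fs_tail //. exact: le_trans (IH th) (star_g_le _ _ _).
  - move=> a b _ hb th. rewrite fs_lim //. exact: star_mono_ge.
  - move=> a b t _ an _ hp hb eb IH th. rewrite fs_succ //.
    have h : th <= star (TCons (fs a th) oone TZero) := le_trans (IH th) (star_a_le _ _ _).
    case: eqP => c0 //. exact: le_trans h (star_g_le _ _ _).
Qed.

Lemma fs_tadd_star_le : forall x t, goodt x t -> omega_multiple x -> forall th v u,
  star x <= u -> th <= u -> v <= u -> oadd oone v <= u -> star (tadd (fs x th) v) <= u.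
Proof.
  apply: good_ind.
  - move=> a b g t gn gg _ IH [an om] th v u hx hth hv hov. rewrite fs_tail //.
    have ha := le_trans (star_a_le a b g) hx. have hb := le_trans (star_b_le a b g) hx.
    have hg := le_trans (star_g_le a b g) hx.
    case E: (fs g th) => [|a2 b2 g2].
    + rewrite tadd_last //. apply: star_cons_le => //. exact: star_mono0_le hv.
    + rewrite tadd_tail // -E. apply: star_cons_le => //. exact: IH.
  - move=> a b _ hb [an _] th v u hx hth hv hov. rewrite fs_lim //.
    have ha := le_trans (star_a_le a b TZero) hx.
    case: (mono_cases a th) => [[_ ->]|[_ ->]].
    + exact: star_mono0_le hv.
    + rewrite tadd_last //. apply: star_cons_le => //. exact: star_mono0_le hv.
  - move=> a b t _ an ga hp hb eb _ _ th v u hx hth hv hov. rewrite fs_succ //.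
    have ha := le_trans (star_a_le a b TZero) hx. have hb' := le_trans (star_b_le a b TZero) hx.
    have o1 : oone <= u.
    { apply: le_trans hb'. apply: oone_le. rewrite eb. exact: le_lt_trans (le0x _) (osucc_gt _). }
    have hpw : star (tadd (TCons (fs a th) oone TZero) v) <= u.
    { case E: (fs a th) => [|a2 b2 g2].
      - rewrite tadd_last0. exact: star_mono0_le hov.
      - rewrite tadd_last // -E. apply: star_cons_le => //.
        + apply: (fs_star_le ga) => //.
        + exact: star_mono0_le hv. }
    case: eqP => c0 //. rewrite tadd_tail //. apply: star_cons_le => //.
    apply: le_trans hb'. rewrite {2}eb. exact: ltW (osucc_gt _).
Qed.

Lemma tau_le_star (x : T) t : twf x -> tau x = Some t -> t <= star x.
Proof.
  elim: x t => [|a IHa b g IHg] t tx.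
  - move=> [<-]; exact: le0x.
  - case: g IHg tx => [|a2 b2 g2] IHg tx.
    + rewrite [tau _]/=. case: (classic (olimit b)) => hb.
      * rewrite odecT // => [[<-]]. exact: star_b_le.
      * rewrite odecF //. case: a IHa tx => [|a1 b1 g1] IHa tx.
        -- move=> [<-]. apply: le_trans (star_b_le _ _ _). exact: oone_le tx.2.2.1.
        -- case E: (tpred _) => [z|] // ht. apply: le_trans (star_a_le _ _ _). exact: IHa tx.1 ht.
    + move=> ht. apply: le_trans (star_g_le _ _ _). exact: IHg tx.2.1 ht.
Qed.

Lemma tadd_twf (x : T) v : twf x -> twf (tadd x v) /\ forall e, hd_lt e x -> e <> TZero -> hd_lt e (tadd x v).
Proof.
  elim: x => [|a IHa b g IHg] tx.
  - rewrite tadd0. split; first exact: twf_mono. move=> e _ en.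
    case: (mono_cases (TZero : T) v) => [[_ ->]|[_ ->]] //=. exact: tlt_zero_ne.
  - case: g IHg tx => [|a2 b2 g2] IHg tx.
    + case: a IHa tx => [|a1 b1 g1] IHa tx.
      * rewrite tadd_last0. split; first exact: twf_mono.
        move=> e he _. case: (mono_cases (TZero : T) (oadd b v)) => [[_ ->]|[_ ->]] //.
      * rewrite tadd_last //. split.
        -- split; first exact: tx.1. split; first exact: twf_mono.
           split; first exact: tx.2.2.1.
           case: (mono_cases (TZero : T) v) => [[_ ->]|[_ ->]] //.
        -- move=> e he _. exact: he.
    + rewrite tadd_tail //. have [h1 h2] := IHg tx.2.1. split.
      * split; first exact: tx.1. split => //. split; first exact: tx.2.2.1.
        apply: h2; first exact: tx.2.2.2. by move=> ea; rewrite ea in tx; case: tx => _ [_ [_ /tlt_zero]].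
      * move=> e he _. exact: he.
Qed.

Lemma tadd_ge (x : T) v : omega_multiple x -> tle x (tadd x v).
Proof.
  elim: x => [|a IHa b g IHg] om.
  - rewrite tadd0. case: (mono_cases (TZero : T) v) => [[_ ->]|[_ ->]]; [by left | by right].
  - case: om => an om. case: g IHg om => [|a2 b2 g2] IHg om.
    + rewrite tadd_last //. case: (mono_cases (TZero : T) v) => [[_ ->]|[_ ->]]; first by left.
      right; right; split => //; right; split => //.
    + rewrite tadd_tail //. case: (IHg om) => [e|l]; first by left; rewrite -e.
      right; right; split => //; right; split => //.
Qed.

Lemma tadd_lt (x : T) v v' : omega_multiple x -> x <> TZero -> v < v' -> tlt (tadd x v) (tadd x v').
Proof.
  elim: x => [|a IHa b g IHg] om xn l //. clear xn.
  case: om => an om. case: g IHg om => [|a2 b2 g2] IHg om.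
  - rewrite !tadd_last //. right; split => //; right; split => //.
    have h' : \bot < v' by exact: le_lt_trans (le0x v) l.
    rewrite (mono_pos _ h'). case: (mono_cases (TZero : T) v) => [[_ ->]|[_ ->]] //.
    right; split => //; by left.
  - rewrite [tadd (TCons a b _) v]tadd_tail // [tadd (TCons a b _) v']tadd_tail //. right; split => //; right; split => //. by apply: IHg.
Qed.

Lemma tadd_star_le (x : T) v u : omega_multiple x -> star x <= u -> v <= u -> star (tadd x v) <= u.
Proof.
  elim: x => [|a IHa b g IHg] om hx hv.
  - rewrite tadd0; exact: star_mono0_le hv.
  - case: om => an om.
    have ha := le_trans (star_a_le a b g) hx. have hb := le_trans (star_b_le a b g) hx.
    have hg := le_trans (star_g_le a b g) hx.
    case: g IHg om hg hx => [|a2 b2 g2] IHg om hg hx.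
    + rewrite tadd_last //. apply: star_cons_le => //. exact: star_mono0_le hv.
    + rewrite tadd_tail //. apply: star_cons_le => //. exact: IHg.
Qed.

Lemma tadd_star_ge1 (x : T) v : omega_multiple x -> star x <= star (tadd x v).
Proof.
  elim: x => [|a IHa b g IHg] om; first exact: le0x.
  case: om => an om. case: g IHg om => [|a2 b2 g2] IHg om.
  - rewrite tadd_last //. apply: star_cons_le; [exact: star_a_le | exact: star_b_le | exact: le0x].
  - rewrite tadd_tail //. apply: star_cons_le; [exact: star_a_le | exact: star_b_le |].
    exact: le_trans (IHg om) (star_g_le _ _ _).
Qed.

Lemma tadd_star_ge2 (x : T) v : omega_multiple x -> v <= star (tadd x v).
Proof.
  elim: x => [|a IHa b g IHg] om; first by rewrite tadd0; exact: star_mono_ge.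
  case: om => an om. case: g IHg om => [|a2 b2 g2] IHg om.
  - rewrite tadd_last //. exact: le_trans (star_mono_ge _ _) (star_g_le _ _ _).
  - rewrite tadd_tail //. exact: le_trans (IHg om) (star_g_le _ _ _).
Qed.

Lemma tsucc_ne0 (z : T) : tsucc z <> TZero.
Proof. case: z => [|a b [|a2 b2 g2]] //=. by case: a. Qed.

Lemma tcons_tsucc_ne (a : T) b a' b' z : TCons a b TZero <> TCons a' b' (tsucc z).
Proof. move=> [_ _ /esym]. exact: tsucc_ne0. Qed.

Lemma tadd_succ (x : T) v z : omega_multiple x -> x <> TZero -> twf z -> tadd x v = tsucc z ->
  exists c, v = osucc c /\ z = tadd x c.
Proof.
  elim: x z => [|a IHa b g IHg] z om xn tz E //. clear xn.
  case: om => an om. case: g IHg om E => [|a2 b2 g2] IHg om E.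
  - rewrite tadd_last // in E.
    case: z tz E => [|a' b' g'] tz E; first by case: E => ea; rewrite ea in an.
    case: g' tz E => [|a'' b'' g''] tz E.
    + case: a' tz E => [|a1 b1 g1] tz E; first by case: E => ea; rewrite ea in an.
      move: E; rewrite [tsucc _]/= => -[ea eb em]. exists \bot. split.
      * case: (mono_cases (TZero : T) v) => [[_ e]|[_ e]]; first by rewrite e in em.
        rewrite e in em. by case: em.
      * by rewrite ea eb tadd_last // mono_bot.
    + move: E; rewrite [tsucc _]/= => -[ea eb em].
      case: g'' tz em => [|a3 b3 g3] tz em.
      * case: a'' tz em => [|a4 b4 g4] tz em.
        -- exists b''. have hb'' : \bot < b'' := tz.2.1.2.2.1.
           case: (mono_cases (TZero : T) v) => [[_ e]|[_ e]]; rewrite e in em => //.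
           case: em => ev. split => //. rewrite ea eb tadd_last; last by rewrite -ea. by rewrite (mono_pos _ hb'').
        -- case: (mono_cases (TZero : T) v) => [[_ e]|[_ e]]; rewrite e in em => //.
      * case: (mono_cases (TZero : T) v) => [[_ e]|[_ e]]; rewrite e in em => //.
        by have := tcons_tsucc_ne em.
  - rewrite tadd_tail // in E.
    have gn : TCons a2 b2 g2 <> TZero by [].
    have hd : forall w, tadd (TCons a2 b2 g2) w <> tone.
    { move=> w. case: g2 IHg om {E gn} => [|a3 b3 g3] IHg om.
      - rewrite tadd_last; last exact: om.1. move=> [ea _ _]; exact: om.1 ea.
      - rewrite tadd_tail //. move=> [ea _ _]; exact: om.1 ea. }
    case: z tz E => [|a' b' g'] tz E; first by case: E => ea; rewrite ea in an.
    case: g' tz E => [|a'' b'' g''] tz E.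
    + case: a' tz E => [|a1 b1 g1] tz E; first by case: E => ea; rewrite ea in an.
      move: E => /= [_ _ e]. by have := hd v.
    + move: E. rewrite [tsucc (TCons a' b' _)]/=. move=> [ea eb eg].
      have [c [ec ez]] := IHg (TCons a'' b'' g'') om gn tz.2.1 eg.
      exists c; split => //. by rewrite tadd_tail // -ez -ea -eb.
Qed.

Lemma tadd_dec (x : T) v z : omega_multiple x -> x <> TZero -> twf z -> ~ tlt z x -> tlt z (tadd x v) ->
  exists c, c < v /\ z = tadd x c.
Proof.
  elim: x z => [|a IHa b g IHg] z om xn tz nl l //. clear xn.
  case: om => an om.
  case: z tz nl l => [|a' b' g'] tz nl l; first by exfalso; apply: nl.
  case: g IHg om nl l => [|a2 b2 g2] IHg om nl l.
  - rewrite tadd_last // in l.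
    case: l => [la|[ea [lb|[eb lg]]]]; [by exfalso; apply: nl; left | by exfalso; apply: nl; right; split => //; left |].
    subst a' b'.
    case: (mono_cases (TZero : T) v) => [[_ e]|[hv e]]; rewrite e in lg; first by have := tlt_zero lg.
    case: g' tz nl lg => [|a3 b3 g3] tz nl lg.
    + exists \bot; split => //. by rewrite tadd_last // mono_bot.
    + case: lg => [/tlt_zero //|[e3 [lb3|[_ /tlt_zero //]]]]. subst a3.
      have tg := tz.2.1. clear nl. case: g3 tg tz => [|a5 b5 g5] tg tz; last by have := tg.2.2.2; move/tlt_zero.
      exists b3; split => //. rewrite tadd_last // mono_pos //. exact: tg.2.2.1.
  - rewrite tadd_tail // in l.
    case: l => [la|[ea [lb|[eb lg]]]]; [by exfalso; apply: nl; left | by exfalso; apply: nl; right; split => //; left |].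
    subst a' b'.
    have nl' : ~ tlt g' (TCons a2 b2 g2).
    { move=> h; apply: nl; right; split => //; right; split => //. }
    have [c [lc ez]] := IHg g' om (@tcons_ne0 _ _ _) tz.2.1 nl' lg.
    exists c; split => //. by rewrite [RHS]tadd_tail // ez.
Qed.

Lemma star_fs_tadd_ge (x : T) v th : omega_multiple x -> x <> TZero -> \bot < v ->
  star x <= star (fs (tadd x v) th).
Proof.
  elim: x => [|a IHa b g IHg] om xn hv //. clear xn.
  case: om => an om. case: g IHg om => [|a2 b2 g2] IHg om.
  - rewrite tadd_last // mono_pos // fs_tail //.
    apply: star_cons_le; [exact: star_a_le | exact: star_b_le | exact: le0x].
  - rewrite tadd_tail // fs_tail; last first.
    { case: g2 IHg om => [|a3 b3 g3] IHg om; [rewrite tadd_last //; exact: om.1 | by rewrite tadd_tail]. }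
    apply: star_cons_le; [exact: star_a_le | exact: star_b_le |].
    exact: le_trans (IHg om (@tcons_ne0 _ _ _) hv) (star_g_le _ _ _).
Qed.

End Ord.

Section Main.
Context {d : Order.disp_t} {O : bOrderType d}.
Local Notation T := (oterm O).

Lemma tpred_none (x : T) : tpred x = None -> ~ tsuccP x.
Proof. rewrite /tpred => H h. by rewrite odecT in H. Qed.

Lemma incr_le (f : nat -> O) : (forall n, f n < f n.+1) -> forall m n, (m <= n)%N -> f m <= f n.
Proof.
  move=> inc m n /subnKC <-. elim: (n - m)%N => [|k IH]; first by rewrite addn0.
  rewrite addnS. exact: le_trans IH (ltW (inc _)).
Qed.

Lemma tadd_ne0 (x : T) v : x <> TZero -> omega_multiple x -> tadd x v <> TZero.
Proof.
  case: x => [//|a b g] _ [an _]. case: g => [|a2 b2 g2].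
  - by rewrite tadd_last.
  - by rewrite tadd_tail.
Qed.

End Main.

Theorem lemma4p6 (d : Order.disp_t) (O : bOrderType d) (X : O -> Prop)
  (alpha : oterm O) (beta t : O) (tn : nat -> O) :
  is_omega1 O -> club X -> ~ X \bot ->
  twf alpha -> alpha <> TZero -> omega_multiple alpha ->
  tau alpha = Some t ->
  hat X (tadd alpha beta) -> JUMP X (tadd alpha beta) ->
  (forall n, tn n < tn n.+1) -> osup_is tn t ->
  let s := fun n => Theta X (tadd (fs alpha (tn n)) (ThetaStar X (tadd alpha beta))) in
  (forall n, s n < s n.+1) /\ osup_is s (Theta X (tadd alpha beta)).
Proof.
  move=> Hom cX nX0 twa an om ht _ hjump tinc tsup s.
  have tl : olimit t := osup_limit Hom tinc tsup.
  have ga : goodt alpha t by [].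
  pose xi := tadd alpha beta.
  pose delta := ThetaStar X xi.
  have spec := ThetaSpec_Theta Hom cX.
  have ThP : forall z, twf z -> X (Theta X z) /\ star z < Theta X z.
  { move=> z tz. have [[h1 [h2 _]] _] := spec z tz. by split. }
  have ThLt : forall z w, twf z -> twf w -> tlt z w -> star z < Theta X w -> Theta X z < Theta X w.
  { move=> z w tz tw lzw sz. have [[_ [_ h3]] _] := spec w tw. exact: h3. }
  have ThMin : forall w th, twf w -> X th -> star w < th ->
      (forall z, twf z -> tlt z w -> star z < th -> Theta X z < th) -> Theta X w <= th.
  { move=> w th tw h1 h2 h3. have [_ h] := spec w tw. apply: h. by split; [|split]. }
  have twxi : twf xi := (tadd_twf beta twa).1.
  have tlim : forall n, tn n < t by move=> n; exact: osup_incr tsup tinc.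
  have tpos : forall n, \bot < tn n.+1 by move=> n; exact: le_lt_trans (le0x _) (tinc n).
  have tstar : t <= star alpha := tau_le_star Hom twa ht.
  have Hd : star alpha <= delta /\ delta < Theta X xi /\ star xi <= delta /\
     (forall z, twf z -> ~ tlt z alpha -> tlt z xi -> Theta X z <= delta).
  { case E: (tpred xi) => [z|].
    - have [tz exi] := tpred_some E.
      have dE : delta = Theta X z by rewrite /delta /ThetaStar E.
      have [c [ec ez]] := tadd_succ om an tz exi.
      have szt := (ThP z tz).2.
      have sa : star alpha <= star z by rewrite ez; exact: tadd_star_ge1.
      have cz : c <= star z by rewrite ez; exact: tadd_star_ge2.
      rewrite dE. split; first exact: ltW (le_lt_trans sa szt).
      split.
      + apply: ThLt => //.
        * rewrite ez /xi ec. apply: tadd_lt => //. exact: (osucc_gt Hom).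
        * apply: le_lt_trans _ (ThP xi twxi).2. rewrite ez /xi. apply: tadd_star_le => //.
          -- exact: tadd_star_ge1.
          -- apply: le_trans (ltW (osucc_gt Hom c)) _. rewrite ec. exact: tadd_star_ge2.
      split.
      + rewrite /xi. apply: tadd_star_le => //; first exact: ltW (le_lt_trans sa szt).
        rewrite ec. apply: (osucc_min Hom). exact: le_lt_trans cz szt.
      + move=> z' tz' nl lz. have [g [lg ez']] := tadd_dec om an tz' nl lz.
        have gc : g <= c by apply: (lt_osucc Hom); rewrite -ec.
        move: gc; rewrite le_eqVlt => /orP [/eqP eg|lgc].
        * by rewrite ez' eg -ez.
        * apply: ltW. apply: ThLt => //.
          -- rewrite ez' ez. exact: tadd_lt.
          -- apply: le_lt_trans _ szt. rewrite ez'. apply: tadd_star_le => //.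
             exact: le_trans (ltW lgc) cz.
    - have nts := tpred_none E.
      have fx : FIX X xi.
      { case: hjump => [e|[h|h]] //. by have := tadd_ne0 an om e. }
      have [_ [hs [htau [g [tg [lg hg]]]]]] := fx.
      have dE : delta = star xi by rewrite /delta /ThetaStar E odecT // htau.
      rewrite dE. split; first exact: tadd_star_ge1.
      split; first exact: (ThP xi twxi).2.
      split => //.
      move=> z' tz' nl lz. have [c [lc ez']] := tadd_dec om an tz' nl lz.
      apply: ltW. rewrite -hg. apply: ThLt => //; first exact: tlt_trans lz lg.
      rewrite hg.
      have b0 : \bot < beta by exact: le_lt_trans (le0x c) lc.
      have sa : star alpha < star xi := le_lt_trans (star_fs_tadd_ge oone om an b0) hs.
      have sb : beta <= star xi := tadd_star_ge2 _ om.
      apply: le_lt_trans (_ : star z' <= Order.max (star alpha) c) _.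
      + rewrite ez'. apply: tadd_star_le => //; by rewrite le_max lexx ?orbT.
      + rewrite gt_max sa /=. exact: lt_le_trans lc sb. }
  have [dA [dX [dxi D4]]] := Hd.
  have oad : oadd oone delta = delta := oadd_one Hom tl (le_trans tstar dA).
  pose xn n := tadd (fs alpha (tn n)) delta.
  have sE : forall n, s n = Theta X (xn n) by [].
  have twn : forall n, twf (xn n).
  { move=> n. exact: (tadd_twf delta (fs_twf Hom ga (tlim n)).1).1. }
  have lt_fs : forall n, tlt (xn n) (fs alpha (tn n.+1)).
  { move=> n. apply: (fs_tadd_lt ga om); [exact: (tinc n) | exact: (tlim n.+1)]. }
  have ge_fs : forall n, tle (fs alpha (tn n.+1)) (xn n.+1).
  { move=> n. exact: tadd_ge (fs_om ga om (tpos n)). }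
  have xinc : forall n, tlt (xn n) (xn n.+1).
  { move=> n. exact: tlt_le_trans (lt_fs n) (ge_fs n). }
  have xlt : forall n, tlt (xn n) xi.
  { move=> n. apply: tlt_trans (lt_fs n) _. apply: tlt_le_trans (fs_lt Hom ga (tlim n.+1)) _.
    exact: tadd_ge. }
  have sb_up : forall n, star (xn n) <= Order.max (tn n) delta.
  { move=> n. apply: (fs_tadd_star_le Hom ga om); rewrite ?oad le_max ?lexx ?orbT //.
    by rewrite dA orbT. }
  have sb_lo : forall n, Order.max (tn n.+1) delta <= star (xn n.+1).
  { move=> n. rewrite ge_max. apply/andP; split.
    - apply: le_trans (fs_star_ge ga (tn n.+1)) _. exact: tadd_star_ge1 (fs_om ga om (tpos n)).
    - exact: tadd_star_ge2 (fs_om ga om (tpos n)). }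
  have sinc : forall n, s n < s n.+1.
  { move=> n. rewrite !sE. apply: ThLt => //.
    apply: le_lt_trans (sb_up n) _. apply: le_lt_trans _ (ThP _ (twn n.+1)).2.
    apply: le_trans _ (sb_lo n). rewrite ge_max !le_max lexx orbT andbT (ltW (tinc n)) //. }
  have sxi : forall n, s n < Theta X xi.
  { move=> n. rewrite sE. apply: ThLt => //. apply: le_lt_trans (sb_up n) _.
    rewrite gt_max dX andbT. apply: lt_le_trans (tlim n) _. exact: le_trans tstar (le_trans dA (ltW dX)). }
  split => //.
  have [sig hs] := sup_exists Hom s.
  have d1 : delta < s 1%N.
  { rewrite sE. apply: le_lt_trans _ (ThP _ (twn 1%N)).2. apply: le_trans _ (sb_lo 0%N).
    by rewrite le_max lexx orbT. }
  have s1 : s 1%N <= sig := hs.1 1%N.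
  have xs : Theta X xi <= sig.
  { apply: ThMin => //.
    - apply: (osup_club cX _ sinc hs). move=> n; rewrite sE; exact: (ThP _ (twn n)).1.
    - exact: le_lt_trans dxi (lt_le_trans d1 s1).
    - move=> z tz lz sz. case: (classic (tlt z alpha)) => hza.
      + have [th [lth lzt]] := fs_cof Hom ga tz hza.
        have [m hm] : exists m, th <= tn m.
        { apply: NNPP => H. have : t <= th.
          { apply: tsup.2 => n. rewrite leNgt; apply/negP => h; apply: H; exists n; exact: ltW. }
          by rewrite leNgt lth. }
        have [k hk] := osup_lt hs sz.
        pose K := (m + k).+1.
        have hK : tlt z (xn K).
        { apply: tlt_le_trans lzt _. apply: tle_trans (ge_fs (m + k)%N).
          apply: fs_mono_le ga _ (tlim _). apply: le_trans hm _. apply: incr_le tinc _ _ _.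
          exact: leq_trans (leq_addr k m) (leqnSn _). }
        have skK : s k <= s K by apply: incr_le sinc _ _ _; exact: leq_trans (leq_addl m k) (leqnSn _).
        apply: lt_trans (osup_incr K hs sinc). rewrite sE.
        apply: ThLt => //. rewrite -sE. exact: lt_le_trans hk skK.
      + apply: le_lt_trans (D4 z tz hza lz) _. exact: lt_le_trans d1 s1. }
  split; first by move=> n; exact: ltW (sxi n).
  move=> u hu. exact: le_trans xs (hs.2 u hu).
Qed.
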